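(* Let $\mathfrak g$ be an $n$-dimensional filiform Lie algebra with associated triple $(z_1,n-2,n)$, $z_1<n-2$. Then for every $\ell$ with $3\le\ell\le\theta_2(\mathfrak g)-1$, $$\dim[C^2\mathfrak g,C^{\ell+1}\mathfrak g]=\dim[C^2\mathfrak g,C^\ell\mathfrak g]-1.$$ Moreover $\theta_2(\mathfrak g)=\dim[C^2\mathfrak g,C^2\mathfrak g]+3$.
   Context: All Lie algebras are over $\mathbb C$; $C^1\mathfrak g=\mathfrak g$, $C^k\mathfrak g=[C^{k-1}\mathfrak g,\mathfrak g]$. A Lie algebra is filiform if $\dim\mathfrak g=n\ge2$ and $\dim C^k\mathfrak g=n-k$ for $2\le k\le n$. An adapted basis of a filiform $\mathfrak g$ is a basis $\{e_1,\dots,e_n\}$ with $[e_1,e_h]=e_{h-1}$ ($3\le h\le n$), $[e_2,e_h]=0$ ($1\le h\le n$), $[e_3,e_h]=0$ ($2\le h\le n$). For non-model filiform $\mathfrak g$, $z_1=\min\{k\ge4:[e_k,e_n]\ne0\}$, $z_2=\min\{k\ge4:[e_k,e_{k+1}]\ne0\}$ (in any adapted basis) are invariants; $(z_1,z_2,n)$ is the associated triple. For a nilpotent Lie algebra $\mathfrak g$ and $k\ge1$, $\theta_k(\mathfrak g)$ is the minimal $\ell$ such that $[C^k\mathfrak g,C^\ell\mathfrak g]=\{0\}$. *)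

(* Defs.v *)
From HB Require Import structures.
From mathcomp Require Import all_boot all_algebra.
From mathcomp Require Import complex.
From mathcomp Require Import Rstruct.
Set Implicit Arguments.
Unset Strict Implicit.
Unset Printing Implicit Defensive.
Import GRing.Theory.
Local Open Scope ring_scope.

Definition Cplx : fieldType := (Rdefinitions.R)[i].

Section Lie.
Variable V : vectType Cplx.
Variable br : V -> V -> V.

Definition is_lie_bracket : Prop :=
  [/\ forall (a : Cplx) (x y z : V), br (a *: x + y) z = a *: br x z + br y z,
      forall (a : Cplx) (x y z : V), br z (a *: x + y) = a *: br z x + br z y,
      forall x : V, br x x = 0
    & forall x y z : V, br x (br y z) + br y (br z x) + br z (br x y) = 0].

(* [A, B]: the subspace spanned by all brackets [a, b], a in A, b in B
   (by bilinearity it is spanned by the brackets of basis vectors). *)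
Definition brsp (A B : {vspace V}) : {vspace V} :=
  <<[seq br a b | a <- vbasis A, b <- vbasis B]>>%VS.

(* Lower central series: C^1 = g, C^k = [C^(k-1), g]  (C^0 := g, unused). *)
Fixpoint lcs (k : nat) : {vspace V} :=
  match k with
  | 0 => fullv
  | k'.+1 => if k' is 0 then fullv else brsp (lcs k') fullv
  end.

Definition filiform : Prop :=
  (2 <= \dim {:V})%N /\
  forall k : nat, (2 <= k <= \dim {:V})%N -> \dim (lcs k) = (\dim {:V} - k)%N.

(* theta_k(g): minimal l (>= 1) with [C^k g, C^l g] = 0.  For a nilpotent
   Lie algebra of dimension n one has C^(n+1) g = 0, so the minimum is
   attained in 1..n+1 and is computed by searching that range. *)
Definition theta (k : nat) : nat :=
  nth 0%N [seq l <- iota 1 (\dim {:V}).+1 | brsp (lcs k) (lcs l) == 0%VS] 0.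

Definition adapted_basis (e : nat -> V) : Prop :=
  let n := \dim {:V} in
  [/\ basis_of fullv [seq e i | i <- iota 1 n],
      forall h : nat, (3 <= h <= n)%N -> br (e 1%N) (e h) = e h.-1,
      forall h : nat, (1 <= h <= n)%N -> br (e 2%N) (e h) = 0
    & forall h : nat, (2 <= h <= n)%N -> br (e 3%N) (e h) = 0].

(* (z1, z2, n) is the associated triple of the (non-model) filiform g:
   in an adapted basis,
     z1 = min {k >= 4 : [e_k, e_n] <> 0},
     z2 = min {k >= 4 : [e_k, e_(k+1)] <> 0}.
   (Both sets being nonempty forces g to be non-model.) *)
Definition assoc_triple (z1 z2 n : nat) : Prop :=
  [/\ filiform, n = \dim {:V} &
  exists e : nat -> V,
    [/\ adapted_basis e,
        [/\ (4 <= z1 <= n)%N, br (e z1) (e n) != 0 &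
            forall k : nat, (4 <= k < z1)%N -> br (e k) (e n) = 0]
      & [/\ (4 <= z2)%N, (z2 < n)%N, br (e z2) (e z2.+1) != 0 &
            forall k : nat, (4 <= k < z2)%N -> br (e k) (e k.+1) = 0]]].

End Lie.

(* Main.v *)
Require Import Defs.
From HB Require Import structures.
From mathcomp Require Import all_boot all_algebra.
From mathcomp Require Import complex.
From mathcomp Require Import Rstruct.
From mathcomp Require Import zify.
Import GRing.Theory.
Local Open Scope ring_scope.


Lemma nth_filter_first (P : pred nat) (N l0 : nat) :
  (1 <= l0 <= N)%N -> P l0 -> (forall l, (1 <= l < l0)%N -> ~~ P l) ->
  nth 0%N [seq l <- iota 1 N | P l] 0 = l0.
Proof.
move=> hl Pl0 hlt.
have -> : N = ((l0 - 1) + (N - l0).+1)%N by lia.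
rewrite iotaD filter_cat.
rewrite (@eq_in_filter _ P pred0) ?filter_pred0 /=; last first.
  by move=> x; rewrite mem_iota => hx; apply/negbTE/hlt; lia.
have -> : (1 + (l0 - 1))%N = l0 by lia.
by rewrite /= Pl0.
Qed.

Lemma lin_span (V : vectType Cplx) (f : V -> V) (U : {vspace V}) (X : seq V) :
  (forall a x y, f (a *: x + y) = a *: f x + f y) ->
  {in X, forall x, f x \in U} -> forall x, x \in <<X>>%VS -> f x \in U.
Proof.
move=> fl fX x /(coord_span (X:=in_tuple X)) ->.
have fD : forall x y, f (x + y) = f x + f y by move=> x1 y1; have := fl 1 x1 y1; rewrite !scale1r.
have f0 : f 0 = 0.
  have h := fD 0 0; rewrite addr0 in h.
  by apply: (@addrI _ (f 0)); rewrite addr0 -h.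
apply: (big_ind (fun y => f y \in U)).
- by rewrite f0 mem0v.
- by move=> y1 y2 h1 h2; rewrite fD memvD.
- move=> i _; have -> : forall a y, f (a *: y) = a *: f y.
    by move=> a y; rewrite -[a *: y]addr0 fl f0 addr0.
  by rewrite memvZ // fX // mem_nth.
Qed.

Set Implicit Arguments.
Unset Strict Implicit.

Section LieFacts.
Variable V : vectType Cplx.
Variable br : V -> V -> V.
Hypothesis Hlie : is_lie_bracket br.

Lemma brL z : forall a x y, br z (a *: x + y) = a *: br z x + br z y.
Proof. by case: Hlie => _ h _ _ a x y; apply: h. Qed.
Lemma brR z : forall a x y, br (a *: x + y) z = a *: br x z + br y z.
Proof. by case: Hlie => h _ _ _ a x y; apply: h. Qed.
Lemma brxx x : br x x = 0.
Proof. by case: Hlie => _ _ h _; apply: h. Qed.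

Lemma br0r x : br x 0 = 0.
Proof. have := brL x 1 0 0; rewrite !scale1r !addr0 => h.
by apply: (@addrI _ (br x 0)); rewrite addr0 -h. Qed.
Lemma br0l x : br 0 x = 0.
Proof. have := brR x 1 0 0; rewrite !scale1r !addr0 => h.
by apply: (@addrI _ (br 0 x)); rewrite addr0 -h. Qed.
Lemma brDr x y z : br x (y + z) = br x y + br x z.
Proof. by have := brL x 1 y z; rewrite !scale1r. Qed.
Lemma brDl x y z : br (x + y) z = br x z + br y z.
Proof. by have := brR z 1 x y; rewrite !scale1r. Qed.
Lemma brZr a x y : br x (a *: y) = a *: br x y.
Proof. by have := brL x a y 0; rewrite !addr0 br0r addr0. Qed.
Lemma brZl a x y : br (a *: x) y = a *: br x y.
Proof. by have := brR y a x 0; rewrite !addr0 br0l addr0. Qed.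
Lemma brC x y : br x y = - br y x.
Proof.
have := brxx (x + y); rewrite brDl !brDr !brxx add0r addr0 => /eqP.
by rewrite addr_eq0 => /eqP.
Qed.
Lemma brNr x y : br x (- y) = - br x y.
Proof. by rewrite -scaleN1r brZr scaleN1r. Qed.
Lemma brNl x y : br (- x) y = - br x y.
Proof. by rewrite -scaleN1r brZl scaleN1r. Qed.

Lemma brDer z x y : br z (br x y) = br (br z x) y + br x (br z y).
Proof.
case: Hlie => _ _ _ J; have := J z x y.
rewrite (brC y z) brNr (brC y (br z x)) => /eqP.
by rewrite -addrA addr_eq0 opprD !opprK => /eqP ->; rewrite addrC.
Qed.

Lemma br_in (X Y : seq V) (S : {vspace V}) :
  (forall x y, x \in X -> y \in Y -> br x y \in S) ->
  forall a b, a \in <<X>>%VS -> b \in <<Y>>%VS -> br a b \in S.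
Proof.
move=> h a b ha hb.
have hy : forall y, y \in Y -> br a y \in S.
  move=> y hy; apply: (@lin_span _ (fun t => br t y)) ha.
    by move=> c t u; apply: brR.
  by move=> x hx; apply: h.
by apply: (@lin_span _ (br a)) hb => //; apply: brL.
Qed.

Lemma brsp_mem (A B : {vspace V}) a b : a \in A -> b \in B -> br a b \in brsp br A B.
Proof.
move=> ha hb; apply: (@br_in (vbasis A) (vbasis B)).
- by move=> x y hx hy; apply: memv_span; apply: allpairs_f.
- by rewrite (span_basis (vbasisP A)).
- by rewrite (span_basis (vbasisP B)).
Qed.

Lemma brsp_sub (A B : {vspace V}) (S : {vspace V}) :
  (forall a b, a \in A -> b \in B -> br a b \in S) -> (brsp br A B <= S)%VS.
Proof.
move=> h; apply/span_subvP => z /allpairsP [[x y] /= [hx hy ->]].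
by apply: h; apply: vbasis_mem.
Qed.

Lemma lcsS k : (1 <= k)%N -> lcs br k.+1 = brsp br (lcs br k) fullv.
Proof. by case: k. Qed.


End LieFacts.

Unset Implicit Arguments.
Set Strict Implicit.


Section Main.
Variable V : vectType Cplx.
Variable br : V -> V -> V.
Hypothesis Hlie : is_lie_bracket br.
Variable n : nat.
Variable e : nat -> V.
Hypothesis Hn : (6 <= n)%N.
Hypothesis Hdim : \dim {:V} = n.
Hypothesis Hfil : forall k, (2 <= k <= n)%N -> \dim (lcs br k) = (n - k)%N.
Hypothesis Hb : basis_of fullv [seq e i | i <- iota 1 n].
Hypothesis H1 : forall h, (3 <= h <= n)%N -> br (e 1%N) (e h) = e h.-1.
Hypothesis H2 : forall h, (1 <= h <= n)%N -> br (e 2%N) (e h) = 0.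
Hypothesis H3 : forall h, (2 <= h <= n)%N -> br (e 3%N) (e h) = 0.
Hypothesis Hz : forall k, (4 <= k < n - 2)%N -> br (e k) (e k.+1) = 0.

Let D := br (e 1%N).

Lemma D2 : D (e 2%N) = 0.
Proof. by rewrite /D (brC Hlie) H2 ?oppr0 //; lia. Qed.

Lemma Dbr a b : (3 <= a <= n)%N -> (3 <= b <= n)%N ->
  D (br (e a) (e b)) = br (e a.-1) (e b) + br (e a) (e b.-1).
Proof. by move=> ha hb; rewrite /D (brDer Hlie) !H1. Qed.

Lemma zeroP d : forall i, (2 <= i)%N -> (i + d <= n - 2)%N -> br (e i) (e (i + d)) = 0.
Proof.
have P1 : forall i, (2 <= i)%N -> (i + 1 <= n - 2)%N -> br (e i) (e (i + 1)) = 0.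
  move=> i hi hin; rewrite addn1.
  case: (ltnP i 4) => hi4.
    case: (i =P 2%N) => [->|ne]; first by rewrite H2 //; lia.
    have -> : i = 3%N by lia.
    by rewrite H3 //; lia.
  by rewrite Hz //; lia.
suff : forall i, (2 <= i)%N -> (i + d <= n - 2)%N ->
   br (e i) (e (i + d)) = 0 /\ ((i + d.+1 <= n - 2)%N -> br (e i) (e (i + d.+1)) = 0).
  by move=> h i hi hin; case: (h i hi hin).
elim: d => [|d IH] i hi hin.
  by rewrite addn0 (brxx Hlie); split=> // h; apply: P1.
split; first by case: (IH i hi ltac:(lia)) => _ /(_ hin).
move=> hin2.
case: (IH i.+1 ltac:(lia) ltac:(lia)) => h0 h1.
have h1' := h1 ltac:(lia).
have := @Dbr i.+1 (i + d.+2)%N ltac:(lia) ltac:(lia).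
have E1 : (i + d.+2 = i.+1 + d.+1)%N by lia.
have E2 : ((i + d.+2).-1 = i.+1 + d)%N by lia.
rewrite E2 h0 addr0 /= {1}E1 h1' /D (br0r Hlie).
by move=> ->.
Qed.

Let v := br (e (n - 2)%N) (e (n - 1)%N).

Lemma Wv s : (s <= n - 4)%N -> br (e (n - 2 - s)%N) (e (n - 1)%N) = iter s D v.
Proof.
elim: s => [|s IH] hs; first by rewrite subn0.
rewrite iterS -IH; last lia.
rewrite Dbr; try lia.
have -> : ((n - 2 - s).-1 = n - 2 - s.+1)%N by lia.
have -> : ((n - 1).-1 = (n - 2 - s) + s)%N by lia.
by rewrite zeroP ?addr0 //; lia.
Qed.

Lemma Wv' j : (2 <= j <= n - 2)%N -> br (e j) (e (n - 1)%N) = iter (n - 2 - j) D v.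
Proof. by move=> hj; rewrite -Wv; [congr (br (e _) _); lia | lia]. Qed.

Definition E k := <<[seq e i | i <- iota 2 k.-1]>>%VS.

Lemma mem_E i k : (2 <= i <= k)%N -> e i \in E k.
Proof. by move=> h; apply: memv_span; apply: map_f; rewrite mem_iota; lia. Qed.

Lemma E_sub (U : {vspace V}) k : (forall i, (2 <= i <= k)%N -> e i \in U) -> (E k <= U)%VS.
Proof.
move=> h; apply/span_subvP => x; case/mapP => i; rewrite mem_iota => hi ->; apply: h; lia.
Qed.

Lemma E_mono k k' : (k <= k')%N -> (E k <= E k')%VS.
Proof. by move=> h; apply: E_sub => i hi; apply: mem_E; lia. Qed.

Lemma dimE k : (k <= n)%N -> \dim (E k) = k.-1.
Proof.
move=> hk; have := basis_free Hb.
have -> : n = (1 + (k.-1 + (n - 1 - k.-1)))%N by lia.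
rewrite iotaD map_cat /= free_cons => /andP [_].
rewrite iotaD map_cat => /catl_free /eqP.
by rewrite size_map size_iota.
Qed.

Lemma lcsE k : (2 <= k <= n)%N -> lcs br k = E (n - k + 1).
Proof.
have sub : forall k, (1 <= k <= n)%N -> (E (n - k + 1) <= lcs br k)%VS.
  elim=> [|j IH] hj; first lia.
  case: (posnP j) => [->|kpos]; first exact: subvf.
  rewrite (lcsS br kpos); apply: E_sub => i hi.
  have -> : e i = - br (e i.+1) (e 1%N).
    by rewrite (brC Hlie) opprK H1 //; lia.
  rewrite memvN; apply: (brsp_mem Hlie); last exact: memvf.
  by apply: (subvP (IH ltac:(lia))); apply: mem_E; lia.
move=> hk; apply/eqP; rewrite eq_sym eqEdim sub /=; last lia.
by rewrite dimE ?Hfil //; lia.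
Qed.

Lemma D_E k x : (k <= n)%N -> x \in E k -> D x \in E k.-1.
Proof.
move=> hk; apply: lin_span; first by move=> a y z; apply: (brL Hlie).
move=> y; case/mapP => i; rewrite mem_iota => hi ->.
case: (i =P 2%N) => [->|ne]; first by rewrite D2 mem0v.
by rewrite /D H1; [apply: mem_E | ]; lia.
Qed.

Lemma iterD_E s k x : (k <= n)%N -> x \in E k -> iter s D x \in E (k - s).
Proof.
move=> hk hx; elim: s => [|s IH]; first by rewrite subn0.
by rewrite iterS subnS; apply: D_E => //; lia.
Qed.

Lemma iterD_e s m : (m <= n)%N -> (s + 2 <= m)%N -> iter s D (e m) = e (m - s)%N.
Proof.
move=> hm; elim: s => [|s IH] hs; first by rewrite subn0.
rewrite iterS IH; last lia.
by rewrite /D H1; [congr e; lia | lia].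
Qed.

Lemma iterD_lin s a x y : iter s D (a *: x + y) = a *: iter s D x + iter s D y.
Proof. by elim: s => [|s IH] //; rewrite !iterS IH /D (brL Hlie). Qed.

Lemma v_mem : v \in E (n - 2).
Proof.
have := @lcsE 3 ltac:(lia).
have -> : (n - 3 + 1 = n - 2)%N by lia.
move <-; rewrite (@lcsS _ br 2%N) //; apply: (brsp_mem Hlie); last exact: memvf.
by rewrite lcsE; [apply: mem_E|]; lia.
Qed.

Hypothesis Hv : v != 0.

Let exv : exists k, v \in E k := ex_intro (fun k => v \in E k) _ v_mem.
Let m := ex_minn exv.

Lemma m_spec : v \in E m /\ (forall k, v \in E k -> (m <= k)%N).
Proof. by rewrite /m; case: ex_minnP. Qed.

Lemma m_le : (m <= n - 2)%N.
Proof. by case: m_spec => _ h; apply: h; apply: v_mem. Qed.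

Lemma m_ge : (2 <= m)%N.
Proof.
case: m_spec => h _; case: (leqP 2 m) => // hm.
move: h; rewrite /E; have -> : m.-1 = 0%N by lia.
by rewrite /= span_nil memv0 (negbTE Hv).
Qed.

Lemma v_dec : exists c w, [/\ c != 0, w \in E m.-1 & v = c *: e m + w].
Proof.
have hm := m_ge; case: m_spec => hv hmin.
move: hv; rewrite {1}/E.
have -> : m.-1 = (m.-2 + 1)%N by lia.
rewrite iotaD map_cat span_cat /=.
have -> : (2 + m.-2 = m)%N by lia.
rewrite span_seq1 => /memv_addP [u hu [w' /vlineP [c hw'] hveq]].
exists c, u; split; [|by rewrite /E addn1| by rewrite hveq hw' addrC].
apply/eqP => c0; move: hveq; rewrite hw' c0 scale0r addr0 => hveq.
have : v \in E m.-1 by rewrite hveq.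
by move/hmin; lia.
Qed.


Definition G a := <<[seq iter s D v | s <- iota a (n - 3 - a)]>>%VS.

Lemma memG s a : (a <= s)%N -> (s <= n - 4)%N -> iter s D v \in G a.
Proof. by move=> h1 h2; apply: memv_span; apply: map_f; rewrite mem_iota; lia. Qed.

Lemma G_mono a b : (a <= b)%N -> (G b <= G a)%VS.
Proof.
move=> h; apply/span_subvP => x; case/mapP => s; rewrite mem_iota => hs ->.
by apply: memG; lia.
Qed.

Lemma keyG i : (2 <= i <= m)%N -> e i \in G (m - i).
Proof.
have hm2 := m_le; have hm1 := m_ge.
case: v_dec => c [w [c0 hw hvd]].
elim: i {-2}i (leqnn i) => [|N IH] i hiN hi; first lia.
have -> : e i = c^-1 *: (iter (m - i) D v - iter (m - i) D w).
  rewrite hvd iterD_lin iterD_e; try lia.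
  have -> : (m - (m - i) = i)%N by lia.
  by rewrite addrK scalerA mulVf // scale1r.
rewrite memvZ // memvB //; first by apply: memG; lia.
have hE := @iterD_E (m - i) m.-1 w ltac:(lia) hw.
have : (E (m.-1 - (m - i)) <= G (m - i))%VS.
  apply: E_sub => j hj.
  apply: (subvP (@G_mono (m - i)%N (m - j)%N ltac:(lia))).
  by apply: IH; lia.
by move/subvP; apply.
Qed.

Lemma G_E a : G a = E (m - a).
Proof.
have hm2 := m_le; have hm1 := m_ge.
apply/eqP; rewrite eqEsubv; apply/andP; split.
  apply/span_subvP => x; case/mapP => s; rewrite mem_iota => hs ->.
  case: m_spec => hv _.
  apply: (subvP (@E_mono (m - s)%N _ _)); first lia.
  by apply: iterD_E => //; lia.
apply: E_sub => i hi.
by apply: (subvP (@G_mono a (m - i)%N _)); [lia | apply: keyG; lia].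
Qed.

Lemma brsp_G l : (2 <= l <= n)%N -> brsp br (lcs br 2) (lcs br l) = G (l - 3).
Proof.
move=> hl; rewrite !lcsE; try lia.
apply/eqP; rewrite eqEsubv; apply/andP; split.
  apply: brsp_sub => a b ha hb; apply: (br_in Hlie) ha hb => x y.
  case/mapP => i; rewrite mem_iota => hi ->; case/mapP => j; rewrite mem_iota => hj ->.
  case: (i =P (n - 1)%N) => [hi1|hi1]; case: (j =P (n - 1)%N) => [hj1|hj1].
  - by rewrite hi1 hj1 (brxx Hlie) mem0v.
  - rewrite hi1 (brC Hlie) Wv'; last lia.
    by rewrite memvN; apply: memG; lia.
  - by rewrite hj1 Wv'; [apply: memG|]; lia.
  - case: (leqP i j) => hij.
      have -> : j = (i + (j - i))%N by lia.
      by rewrite zeroP ?mem0v //; lia.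
    have -> : i = (j + (i - j))%N by lia.
    by rewrite (brC Hlie) zeroP ?oppr0 ?mem0v //; lia.
apply/span_subvP => x; case/mapP => s; rewrite mem_iota => hs ->.
have -> : iter s D v = - br (e (n - 1)%N) (e (n - 2 - s)%N).
  rewrite (brC Hlie) opprK Wv'; last lia.
  by congr iter; lia.
by rewrite memvN; apply: (brsp_mem Hlie); apply: mem_E; lia.
Qed.

Lemma dim_brsp l : (2 <= l <= n)%N ->
  \dim (brsp br (lcs br 2) (lcs br l)) = (m - (l - 3)).-1.
Proof.
move=> hl; have := m_le; have := m_ge => h1 h2.
by rewrite brsp_G // G_E dimE //; lia.
Qed.

Lemma theta_eq : theta br 2 = (m + 2)%N.
Proof.
have h1 := m_le; have h2 := m_ge.
rewrite /theta Hdim; apply: nth_filter_first.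
- lia.
- by rewrite -dimv_eq0 dim_brsp; [apply/eqP; lia | lia].
- move=> l hl; rewrite -dimv_eq0.
  case: (l =P 1%N) => [->|ne].
    have -> : brsp br (lcs br 2) (lcs br 1) = lcs br 3 by [].
    by rewrite Hfil; [apply/eqP; lia | lia].
  by rewrite dim_brsp; [apply/eqP; lia | lia].
Qed.

Lemma main_sec :
  (forall l : nat, (3 <= l <= theta br 2 - 1)%N ->
     \dim (brsp br (lcs br 2) (lcs br l.+1)) =
       (\dim (brsp br (lcs br 2) (lcs br l)) - 1)%N)
  /\ theta br 2 = (\dim (brsp br (lcs br 2) (lcs br 2)) + 3)%N.
Proof.
have h1 := m_le; have h2 := m_ge.
rewrite theta_eq; split.
  by move=> l hl; rewrite !dim_brsp; lia.
by rewrite dim_brsp; lia.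
Qed.

End Main.

Theorem mainTheorem13 (V : vectType Cplx) (br : V -> V -> V) (z1 n : nat) :
  is_lie_bracket br ->
  assoc_triple br z1 (n - 2) n ->
  (z1 < n - 2)%N ->
  (forall l : nat, (3 <= l <= theta br 2 - 1)%N ->
     \dim (brsp br (lcs br 2) (lcs br l.+1)) =
       (\dim (brsp br (lcs br 2) (lcs br l)) - 1)%N)
  /\ theta br 2 = (\dim (brsp br (lcs br 2) (lcs br 2)) + 3)%N.
Proof.
move=> Hlie [[_ Hfil] Hn [e [[Hb H1 H2 H3] _ [hz4 _ Hv Hz]]]] _.
have Hdim : \dim (fullv : {vspace V}) = n by rewrite Hn.
move: Hb H1 H2 H3 Hfil; rewrite -Hn => Hb H1 H2 H3 Hfil.
have Hv' : br (e (n - 2)%N) (e (n - 1)%N) != 0.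
  by move: Hv; have -> : ((n - 2).+1 = n - 1)%N by lia.
apply: (@main_sec V br Hlie n e) => //; lia.
Qed.
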